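(* Let $C$ be a strictly convex subset of a topological real vector space, $f:C\to\mathbb{R}$ a strictly sub-convex function, $D\subseteq\mathbb{R}$ a subset containing $f(C)$, and $\varphi:D\to\mathbb{R}$ a non-decreasing function that is lower semi-continuous (for the subspace topology of $D$). Then $g:C\to\mathbb{R}$, $g(x)=\varphi(f(x))$, is strictly sub-convex.
   Context: Topological real vector spaces are not assumed Hausdorff. $S_r(h)=\{x: h(x)\le r\}$ for a real function $h$. For a subset $S$, $\mathrm{Aff}(S)$ is its affine hull; $\mathrm{ri}(S)$, $\mathrm{rc}(S)$ are the interior and closure of $S$ in the subspace topology of $\mathrm{Aff}(S)$. $]x,y[=\{(1-t)x+ty: t\in[0,1]\}\setminus\{x,y\}$. A set is strictly convex if for any two distinct $x,y$ in its relative closure, $]x,y[$ lies in its relative interior. A function $f$ on $C$ is strictly sub-convex if $S_r(f)$ is strictly convex for every $r\in\mathbb{R}$. *)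

(* Defs.v *)
From HB Require Import structures.
From mathcomp Require Import all_boot all_order all_algebra.
From mathcomp Require Import all_classical all_reals all_analysis.
Set Implicit Arguments. Unset Strict Implicit. Unset Printing Implicit Defensive.
Import Order.TTheory GRing.Theory Num.Theory.
Import numFieldNormedType.Exports.
Local Open Scope classical_set_scope.
Local Open Scope ring_scope.

Section Defs.
Variables (R : realType) (E : topologicalLmodType R).

Definition affine_set (A : set E) : Prop :=
  forall x y (t : R), A x -> A y -> A ((1 - t) *: x + t *: y).

Definition Aff (S : set E) : set E :=
  [set x | forall A : set E, affine_set A -> S `<=` A -> A x].

(* relative interior: interior of S in the subspace topology of Aff S *)
Definition ri (S : set E) : set E :=
  [set x | S x /\ exists U : set E, [/\ open U, U x & U `&` Aff S `<=` S]].

Definition rc (S : set E) : set E := closure S `&` Aff S.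

Definition oseg (x y : E) : set E :=
  [set z | exists2 t : R, 0 <= t <= 1 & z = (1 - t) *: x + t *: y]
  `\` [set x; y].

Definition strictly_convex (S : set E) : Prop :=
  forall x y, rc S x -> rc S y -> x <> y -> oseg x y `<=` ri S.

(* sublevel set S_r(f) of f : C -> R (f given as a total function on E) *)
Definition sublevel (C : set E) (f : E -> R) (r : R) : set E :=
  [set x | C x /\ f x <= r].

Definition strictly_subconvex (C : set E) (f : E -> R) : Prop :=
  forall r : R, strictly_convex (sublevel C f r).

End Defs.

Definition nondecreasing_on (R : realType) (D : set R) (phi : R -> R) : Prop :=
  forall x y, D x -> D y -> x <= y -> phi x <= phi y.

Definition lsc_on (R : realType) (D : set R) (phi : R -> R) : Prop :=
  forall x (a : R), D x -> a < phi x ->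
    exists U : set R, [/\ open U, U x & forall z, U z -> D z -> a < phi z].

(* Main.v *)
Require Import Defs.
From HB Require Import structures.
From mathcomp Require Import all_boot all_order all_algebra.
From mathcomp Require Import all_classical all_reals all_analysis.
Import Order.TTheory GRing.Theory Num.Theory.
Import numFieldNormedType.Exports.
Local Open Scope classical_set_scope.
Local Open Scope ring_scope.

Theorem mainTheorem7 (R : realType) (E : topologicalLmodType R)
    (C : set E) (f : E -> R) (D : set R) (phi : R -> R) :
  strictly_convex C ->
  strictly_subconvex C f ->
  f @` C `<=` D ->
  nondecreasing_on D phi ->
  lsc_on D phi ->
  strictly_subconvex C (fun x => phi (f x)).
Proof.
move=> hC hf hD hmon hlsc r.
have Df : forall x, C x -> D (f x) by move=> x Cx; apply: hD; exists x.
pose Dr := [set t | D t /\ phi t <= r].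
have [[t0 Dt0]|Dr0] := pselect (exists t, Dr t); last first.
  have -> : sublevel C (fun x => phi (f x)) r = set0.
    apply/funext => x; apply/propext; split => // -[Cx hx].
    by exfalso; apply: Dr0; exists (f x); split => //; apply: Df.
  by move=> x y; rewrite /rc closure0 => -[].
have [ub|nub] := pselect (has_ubound Dr); last first.
  have -> : sublevel C (fun x => phi (f x)) r = C.
    apply/funext => x; apply/propext; split => [[]//|Cx]; split => //.
    apply: contrapT => hx; apply: nub; exists (f x) => u [Du hu].
    rewrite leNgt; apply/negP => lt.
    apply: hx; apply: le_trans hu; apply: hmon => //; [exact: Df|exact: ltW].
  exact: hC.
have hs : has_sup Dr by split => //; exists t0.
have -> : sublevel C (fun x => phi (f x)) r = sublevel C f (sup Dr).
  apply/funext => x; apply/propext; split => -[Cx hx]; split => //.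
    by apply: sup_upper_bound => //; split => //; apply: Df.
  rewrite leNgt; apply/negP => lt.
  have [U [oU Ux hU]] := hlsc (f x) r (Df x Cx) lt.
  have : nbhs (f x) U by apply: open_nbhs_nbhs; split.
  move=> /nbhs_ballP [e e0 hb].
  have [u [Du hu] hsu] := sup_adherent e0 hs.
  have [le|lt2] := leP (f x) u.
    by move: lt; rewrite ltNge (le_trans _ hu) //; apply: hmon => //; apply: Df.
  have : r < phi u.
    apply: hU => //; apply: hb; rewrite /ball /= ger0_norm ?subr_ge0 ?(ltW lt2) //.
    by rewrite ltrBlDr -ltrBlDl; apply: le_lt_trans hsu; rewrite lerB.
  by rewrite ltNge hu.
exact: hf.
Qed.
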